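(* Let $\tau$ be a traversal sequence, and let $\mathbf{w}=\langle w^1,\dots,w^n\rangle$ and $\tilde{\mathbf{w}}=\langle\tilde w^1,\dots,\tilde w^n\rangle$ be two sequences of tasks such that $\tilde w^i_s\le w^i_s$ for every $i\in\{1,\dots,n\}$ and every state $s$. Then the total work done by the fractional traversal algorithm with respect to $\tau$ and $\mathbf{w}$ is at least the total work done with respect to $\tau$ and $\tilde{\mathbf{w}}$.
   Context: A metrical task system has states $S=\{1,\dots,m\}$ and a symmetric non-negative matrix $(d_{st})$ with $d_{ss}=0$ satisfying the triangle inequality. A task is a vector $w\in\mathbb{R}_{\ge0}^m$. A traversal sequence is an infinite sequence $\tau=\tau_1,\tau_2,\dots$ of states. Write $\delta_{\ell,\ell'}=\sum_{j=\min(\ell,\ell')}^{\max(\ell,\ell')-1}d_{\tau_j\tau_{j+1}}$. Fractional traversal algorithm on $\tau$: it keeps a position $j$ (initially $t_0=1$) and the work $\rho$ done at the current position since arriving there (initially $0$). On a task $w$, with remaining fraction $f=1$, it repeats while $f>0$: $\lambda\gets\min\{(d_{\tau_j\tau_{j+1}}-\rho)/w_{\tau_j},\,f\}$ (interpreted as $f$ if $w_{\tau_j}=0$), $\rho\gets\rho+\lambda w_{\tau_j}$ (work $\lambda w_{\tau_j}$ is done in state $\tau_j$), $f\gets f-\lambda$, and if $\rho=d_{\tau_j\tau_{j+1}}$ then $j\gets j+1$, $\rho\gets0$. If $t_n$ is the position after processing $n$ tasks and $\rho_{t_n}$ the current value of $\rho$, the total work done is $\delta_{t_0,t_n}+\rho_{t_n}$.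 *)

(* Defs.v *)
From mathcomp Require Import ssreflect ssrbool eqtype ssrnat fintype.
From Stdlib Require Import Reals.

Local Open Scope R_scope.

Section FT.
Variable (m : nat) (d : 'I_m -> 'I_m -> R) (tau : nat -> 'I_m).

Fixpoint pathlen (l k : nat) : R :=
  match k with
  | O => 0
  | S k' => d (tau l) (tau (S l)) + pathlen (S l) k'
  end.

Definition delta (l l' : nat) : R :=
  pathlen (Nat.min l l') (Nat.max l l' - Nat.min l l').

(* One iteration of the inner while-loop body on a task w.
   Configuration: (position j, work rho at current position, remaining f). *)
Definition ft_step (w : 'I_m -> R) (c : nat * R * R) : nat * R * R :=
  let '(j, rho, f) := c in
  let s := tau j in
  let D := d s (tau (S j)) in
  let lam := if Req_EM_T (w s) 0 then f else Rmin ((D - rho) / w s) f in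
  let rho' := rho + lam * w s in
  let f' := f - lam in
  if Req_EM_T rho' D then (S j, 0, f') else (j, rho', f').

Definition ft_iter (w : 'I_m -> R) (k : nat) (j : nat) (rho : R) : nat * R * R :=
  Nat.iter k (ft_step w) (j, rho, 1).

Definition conf_f (c : nat * R * R) : R := let '(_, _, f) := c in f.

Definition ft_task (w : 'I_m -> R) (j : nat) (rho : R) (j' : nat) (rho' : R) : Prop :=
  exists k, (forall k', (k' < k)%nat -> conf_f (ft_iter w k' j rho) > 0) /\
            conf_f (ft_iter w k j rho) <= 0 /\
            (let '(j2, rho2, _) := ft_iter w k j rho in j2 = j' /\ rho2 = rho').

Inductive ft_run (ws : nat -> 'I_m -> R) : nat -> nat -> R -> Prop :=
  | ft_run0 : ft_run ws 0 1 0
  | ft_runS i j rho j' rho' :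
      ft_run ws i j rho -> ft_task (ws (S i)) j rho j' rho' ->
      ft_run ws (S i) j' rho'.

Definition total_work (j : nat) (rho : R) : R := delta 1 j + rho.

End FT.

(* Main.v *)
From Stdlib Require Import Lra Lia Psatz.
Require Import Defs.
From mathcomp Require Import ssreflect ssrbool eqtype ssrnat fintype.
From Stdlib Require Import Reals.
Local Open Scope R_scope.

Section Aux.
Variable (m : nat) (d : 'I_m -> 'I_m -> R) (tau : nat -> 'I_m).
Hypothesis d_nonneg : forall s t, 0 <= d s t.

Ltac cl := match goal with
  | |- _ /\ _ => split; cl
  | |- _ \/ _ => first [left; cl | right; cl]
  | _ => first [reflexivity | lia | nra]
  end.

Definition DD (j : nat) := d (tau j) (tau (S j)).

Definition lex (a b : nat * R) :=
  (fst a < fst b)%coq_nat \/ (fst a = fst b /\ snd a <= snd b).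

Lemma lex_trans a b c : lex a b -> lex b c -> lex a c.
Proof.
  rewrite /lex; destruct a, b, c; simpl.
  intros [H|[H1 H2]] [H'|[H1' H2']]; subst; try (left; lia); right; split; auto; lra.
Qed.

Lemma step_spec w j r f : 0 <= w (tau j) -> 0 <= r <= DD j -> 0 < f ->
  let c := @ft_step m d tau w (j,r,f) in
  ((fst (fst c) = j /\ r <= snd (fst c) <= DD j) \/
   (fst (fst c) = S j /\ snd (fst c) = 0)) /\ 0 <= snd c <= f.
Proof.
  move=> Hw Hr Hf; rewrite /ft_step /=; fold (DD j).
  set (W := w (tau j)) in *. set (D := DD j) in *. clearbody W D.
  case: Req_dec_T => [E|E].
  - case: (Req_dec_T (r + f * W) D) => [E2|E2]; simpl.
    + cl.
    + cl.
  - have HW : 0 < W by lra.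
    have HA : (D - r) / W * W = D - r by field; lra.
    have HA0 : 0 <= (D - r) / W by nra.
    rewrite /Rmin; case: (Rle_dec ((D - r) / W) f) => [L|L];
    case: Req_dec_T => [E2|E2]; simpl.
    + cl.
    + cl.
    + cl.
    + cl.
Qed.

Lemma step_same w wt j r rt f ft :
  0 <= wt (tau j) -> wt (tau j) <= w (tau j) ->
  0 <= rt -> rt <= r -> r <= DD j -> ft <= f -> 0 < ft ->
  let c := @ft_step m d tau w (j,r,f) in
  let ct := @ft_step m d tau wt (j,rt,ft) in
  lex (fst ct) (fst c) /\ snd ct <= snd c.
Proof.
  move=> H0 H1 H2 H3 H4 H5 H6; rewrite /ft_step /DD /lex /= -/(DD j).
  set (W := w (tau j)) in *. set (Wt := wt (tau j)) in *. set (D := DD j) in *. clearbody W Wt D.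
  case: (Req_dec_T W 0) => [E|E]; case: (Req_dec_T Wt 0) => [Et|Et]; simpl.
  - rewrite E Et; repeat case: Req_dec_T => ?; simpl; cl.
  - lra.
  - have HW : 0 < W by lra.
    have HA : (D - r) / W * W = D - r by field; lra.
    have HA0 : 0 <= (D - r) / W by nra.
    rewrite Et /Rmin; repeat case: Rle_dec => ?; repeat case: Req_dec_T => ?; simpl; cl.
  - have HW : 0 < W by lra.
    have HA : (D - r) / W * W = D - r by field; lra.
    have HA0 : 0 <= (D - r) / W by nra.
    have HWt : 0 < Wt by lra.
    have HB : (D - rt) / Wt * Wt = D - rt by field; lra.
    have HBA : (D - r) / W <= (D - rt) / Wt.
    { set A := (D - r) / W in HA HA0 *. set B := (D - rt) / Wt in HB *.
      nra. }
    rewrite /Rmin; repeat case: Rle_dec => ?; repeat case: Req_dec_T => ?; simpl; cl.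
Qed.

Inductive BR (w : 'I_m -> R) : nat * R * R -> nat * R -> Prop :=
| BRstop j r f : f <= 0 -> BR w (j, r, f) (j, r)
| BRstep c a : 0 < snd c -> BR w (@ft_step m d tau w c) a -> BR w c a.

Lemma task_BR w j r j' r' : @ft_task m d tau w j r j' r' -> BR w (j, r, 1) (j', r').
Proof.
  case=> k [H1 [H2 H3]].
  rewrite /ft_iter in H1 H2 H3.
  move: (j, r, 1) H1 H2 H3; clear j r.
  elim: k => [|k IH] c H1 H2 H3.
  - simpl in *. destruct c as [[j r] f]. destruct H3; subst. by constructor.
  - apply BRstep.
    + have := H1 O (ltn0Sn k). simpl. destruct c as [[??]?]; simpl; lra.
    + apply IH; rewrite -?Nat.iter_succ_r //.
      move=> k' Hk'. rewrite -Nat.iter_succ_r. exact: (H1 k'.+1 Hk').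
Qed.

Lemma BR_mono w j r f a : (forall s, 0 <= w s) -> 0 <= r <= DD j ->
  BR w (j, r, f) a -> lex (j, r) a /\ (j <= fst a)%coq_nat /\ 0 <= snd a <= DD (fst a).
Proof.
  move=> Hw Hr H. remember (j, r, f) as c eqn:Ec.
  move: j r f Hr Ec. induction H as [j0 r0 f0 Hf|c a Hf H IH]; move=> j r f Hr Ec.
  - case: Ec => -> -> _. split; [right; simpl; split; auto; lra|simpl; split; auto; lra].
  - subst c. simpl in Hf.
    have [S1 S2] := step_spec w j r f (Hw _) Hr Hf.
    destruct (ft_step m d tau w (j, r, f)) as [[j1 r1] f1] eqn:E. simpl in S1, S2.
    have Hr1 : 0 <= r1 <= DD j1.
    { destruct S1 as [[-> ?]|[-> ->]]; [lra| split; [lra| apply d_nonneg]]. }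
    have [L [L2 L3]] := IH j1 r1 f1 Hr1 Logic.eq_refl.
    split; [|split; [|auto]].
    + apply: lex_trans L. rewrite /lex /=.
      destruct S1 as [[-> ?]|[-> ->]]; [right; split; auto; lra|left; lia].
    + destruct S1 as [[-> ?]|[-> ->]]; lia.
Qed.

Lemma task_mono w wt (Hw : forall s, 0 <= w s) (Hwt : forall s, 0 <= wt s)
  (Hle : forall s, wt s <= w s) :
  forall ct at_, BR wt ct at_ ->
  forall jt rt ft j r f a, ct = (jt, rt, ft) -> BR w (j, r, f) a ->
  0 <= rt <= DD jt -> 0 <= r <= DD j -> ft <= f -> lex (jt, rt) (j, r) ->
  lex at_ a.
Proof.
  move=> ct at_ H. induction H as [j0 r0 f0 Hf|c a0 Hf H IH];
    move=> jt rt ft j r f a Ec Hw' Hrt Hr Hf' Hlex.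
  - case: Ec => -> -> _. have [L _] := BR_mono w j r f a Hw Hr Hw'.
    exact: lex_trans Hlex L.
  - subst c. simpl in Hf.
    inversion Hw' as [j1 r1 f1 Hf1|c1 a1 Hf1 Hw1]; subst; [simpl in *; lra|].
    have [S1 S2] := step_spec wt jt rt ft (Hwt _) Hrt Hf.
    destruct Hlex as [Hlt|[Heq Hrle]]; [simpl in Hlt|simpl in Heq, Hrle].
    + destruct (ft_step m d tau wt (jt, rt, ft)) as [[j2 r2] f2] eqn:E. simpl in S1, S2.
      apply: (IH j2 r2 f2 j r f a Logic.eq_refl Hw' _ Hr); [| lra |].
      * destruct S1 as [[-> ?]|[-> ->]]; [lra| split; [lra| apply d_nonneg]].
      * rewrite /lex /=. destruct S1 as [[-> ?]|[-> ->]]; [left; lia|].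
        destruct (Nat.eq_dec (S jt) j) as [<-|Hn]; [right; split; auto; lra|left; lia].
    + subst jt.
      have [T1 T2] := step_spec w j r f (Hw _) Hr ltac:(lra).
      have [L1 L2] := step_same w wt j r rt f ft (Hwt _) (Hle _) ltac:(lra) Hrle
                        ltac:(lra) Hf' Hf.
      destruct (ft_step m d tau wt (j, rt, ft)) as [[j2 r2] f2] eqn:E. simpl in S1, S2.
      destruct (ft_step m d tau w (j, r, f)) as [[j3 r3] f3] eqn:E3. simpl in T1, T2, L1, L2. try rewrite E3 in Hw1.
      apply: (IH j2 r2 f2 j3 r3 f3 a Logic.eq_refl Hw1 _ _ L2 L1).
      * destruct S1 as [[-> ?]|[-> ->]]; [lra| split; [lra| apply d_nonneg]].
      * destruct T1 as [[-> ?]|[-> ->]]; [lra| split; [lra| apply d_nonneg]].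
Qed.

Lemma pathlen_snoc l k : pathlen m d tau l (S k) = pathlen m d tau l k + DD (l + k).
Proof.
  elim: k l => [|k IH] l.
  - rewrite /= /DD addn0; lra.
  - change (pathlen m d tau l k.+2) with (d (tau l) (tau l.+1) + pathlen m d tau l.+1 k.+1).
    change (pathlen m d tau l k.+1) with (d (tau l) (tau l.+1) + pathlen m d tau l.+1 k).
    rewrite IH addSnnS; lra.
Qed.

Lemma pathlen_mono l k k' : (k <= k')%coq_nat -> pathlen m d tau l k <= pathlen m d tau l k'.
Proof.
  elim=> [|k'' _ IH]; [lra|]. rewrite pathlen_snoc. have := d_nonneg (tau (l + k'')) (tau (S (l+k''))).
  rewrite /DD. lra.
Qed.

Lemma tw_eq j r : (1 <= j)%coq_nat -> total_work m d tau j r = pathlen m d tau 1 (j - 1) + r.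
Proof.
  move=> H. rewrite /total_work /delta Nat.min_l // Nat.max_r //.
Qed.

Lemma lex_tw jt rt j r : (1 <= jt)%coq_nat -> (1 <= j)%coq_nat ->
  0 <= rt <= DD jt -> 0 <= r -> lex (jt, rt) (j, r) ->
  total_work m d tau jt rt <= total_work m d tau j r.
Proof.
  move=> H1 H2 Hrt Hr Hl; rewrite !tw_eq //.
  case: jt H1 Hrt Hl => [|a] H1 Hrt Hl; [lia|].
  case: j H2 Hl => [|b] H2 Hl; [lia|].
  rewrite !subSS !subn0.
  case: Hl => [Hlt|[Heq Hle]]; simpl in *.
  - have := pathlen_mono 1 a.+1 b ltac:(lia).
    rewrite pathlen_snoc add1n. lra.
  - case: Heq => ->; lra.
Qed.

End Aux.

Theorem lemma1 (m : nat) (d : 'I_m -> 'I_m -> R)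
  (d_refl : forall s, d s s = 0)
  (d_nonneg : forall s t, 0 <= d s t)
  (d_sym : forall s t, d s t = d t s)
  (d_tri : forall s t u, d s u <= d s t + d t u)
  (tau : nat -> 'I_m) (n : nat) (w wt : nat -> 'I_m -> R)
  (w_nonneg : forall i s, (1 <= i <= n)%nat -> 0 <= w i s)
  (wt_nonneg : forall i s, (1 <= i <= n)%nat -> 0 <= wt i s)
  (wt_le_w : forall i s, (1 <= i <= n)%nat -> wt i s <= w i s)
  (j : nat) (rho : R) (jt : nat) (rhot : R)
  (Hrun : @ft_run m d tau w n j rho)
  (Hrunt : @ft_run m d tau wt n jt rhot) :
  @total_work m d tau jt rhot <= @total_work m d tau j rho.
Proof.
  suff: forall i j rho, ft_run m d tau w i j rho -> (i <= n)%coq_nat ->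
    forall jt rhot, ft_run m d tau wt i jt rhot ->
    lex (jt, rhot) (j, rho) /\ (1 <= j)%coq_nat /\ (1 <= jt)%coq_nat /\
    0 <= rho <= DD m d tau j /\ 0 <= rhot <= DD m d tau jt.
  { move=> H. have [L [H1 [H2 [H3 H4]]]] := H n j rho Hrun (le_n n) jt rhot Hrunt.
    apply: lex_tw; auto; lra. }
  move=> i j0 r0 H. induction H as [|i j1 r1 j2 r2 H IH Ht]; move=> Hn jt0 rt0 Ht0.
  - inversion Ht0; subst. split; [right; simpl; split; auto; lra|].
    split; [lia|split; [lia|]]. have := d_nonneg (tau 1%nat) (tau 2%nat). rewrite /DD. lra.
  - inversion Ht0 as [|i' j3 r3 j4 r4 H3 Ht3]; subst.
    have [L [A1 [A2 [A3 A4]]]] := IH ltac:(lia) _ _ H3.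
    have Hi : (1 <= S i <= n)%nat by apply/andP; split; [done|apply/leP; lia].
    have B := task_BR _ _ _ _ _ _ _ _ Ht.
    have Bt := task_BR _ _ _ _ _ _ _ _ Ht3.
    have [M1 [M2 M3]] := BR_mono _ _ _ d_nonneg _ _ _ _ _ (fun s => w_nonneg _ s Hi) A3 B.
    have [N1 [N2 N3]] := BR_mono _ _ _ d_nonneg _ _ _ _ _ (fun s => wt_nonneg _ s Hi) A4 Bt.
    have K := task_mono _ _ _ d_nonneg _ _ (fun s => w_nonneg _ s Hi) (fun s => wt_nonneg _ s Hi)
              (fun s => wt_le_w _ s Hi) _ _ Bt _ _ _ _ _ _ _ Logic.eq_refl B A4 A3 (Rle_refl _) L.
    simpl in M2, M3, N2, N3.
    split; [exact K|split; [lia|split; [lia|auto]]].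
Qed.
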